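(* Let $\mathcal A\in\mathbb C^{n_1\times n_2\times n_3}$ and $\mathcal A^-\in\mathcal A\{1\}$. Then $\mathcal X=\mathcal A^{-,*}=\mathcal A^-\mathcal A\mathcal A^*$ is the unique $\mathcal X\in\mathbb C^{n_2\times n_1\times n_3}$ satisfying $$\mathcal X(\mathcal A^\dagger)^*\mathcal X=\mathcal X,\qquad \mathcal A\mathcal X=\mathcal A\mathcal A^*,\qquad \mathcal X(\mathcal A^\dagger)^*=\mathcal A^-\mathcal A.$$
   Context: Fix a nonsingular matrix $M\in\mathbb C^{n_3\times n_3}$. For $\mathcal C\in\mathbb C^{n_1\times n_2\times n_3}$ let $\widehat{\mathcal C}=\mathcal C\times_3M$, i.e. $\widehat{\mathcal C}_{ijk}=\sum_{l=1}^{n_3}M_{kl}\mathcal C_{ijl}$, and let $\widehat{\mathcal C}^{(i)}$ denote its $i$-th frontal slice. The M-product $\mathcal C\star_M\mathcal D$ of $\mathcal C\in\mathbb C^{n_1\times n_2\times n_3}$ and $\mathcal D\in\mathbb C^{n_2\times l\times n_3}$ is the unique tensor with $\widehat{\mathcal C\star_M\mathcal D}^{(i)}=\widehat{\mathcal C}^{(i)}\widehat{\mathcal D}^{(i)}$ for all $i\in[n_3]$. Juxtaposition of tensors denotes the M-product. The conjugate transpose $\mathcal A^*$ is defined by $\widehat{\mathcal A^*}^{(i)}=(\widehat{\mathcal A}^{(i)})^*$. The Moore–Penrose inverse $\mathcal A^\dagger$ is the unique $\mathcal W$ satisfying $\mathcal A\mathcal W\mathcal A=\mathcal A$, $\mathcal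 W\mathcal A\mathcal W=\mathcal W$, $(\mathcal A\mathcal W)^*=\mathcal A\mathcal W$, $(\mathcal W\mathcal A)^*=\mathcal W\mathcal A$. $\mathcal A\{1\}$ is the set of all $\mathcal W$ with $\mathcal A\mathcal W\mathcal A=\mathcal A$. The 1-Star inverse associated with $\mathcal A^-$ is $\mathcal A^{-,*}=\mathcal A^-\mathcal A\mathcal A^*$. *)

(* Defs.v *)
From mathcomp Require Import all_boot all_order all_algebra.
Set Implicit Arguments. Unset Strict Implicit. Unset Printing Implicit Defensive.
Import Order.TTheory GRing.Theory Num.Theory.
Local Open Scope ring_scope.

(* Third-order tensors in C^{n1 x n2 x n3}, stored by frontal slices:
   A k is the k-th frontal slice (an n1 x n2 matrix), A k i j = A_{ijk}. *)
Definition tensor (C : Type) (n1 n2 n3 : nat) := {ffun 'I_n3 -> 'M[C]_(n1, n2)}.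

Definition tmode3 (C : numClosedFieldType) (n1 n2 n3 : nat)
  (P : 'M[C]_n3) (A : tensor C n1 n2 n3) : tensor C n1 n2 n3 :=
  [ffun k => \sum_(l < n3) P k l *: A l].

Definition ctmx (C : numClosedFieldType) m n (B : 'M[C]_(m, n)) : 'M[C]_(n, m) :=
  (map_mx Num.conj B)^T.

(* M-product: the unique tensor whose hat-slices are the products of the
   hat-slices (hat = x_3 M); for nonsingular M it is obtained by x_3 M^{-1}. *)
Definition mprod (C : numClosedFieldType) (n1 n2 l n3 : nat) (M : 'M[C]_n3)
  (A : tensor C n1 n2 n3) (B : tensor C n2 l n3) : tensor C n1 l n3 :=
  tmode3 (invmx M) [ffun k => tmode3 M A k *m tmode3 M B k].

Definition tctr (C : numClosedFieldType) (n1 n2 n3 : nat) (M : 'M[C]_n3)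
  (A : tensor C n1 n2 n3) : tensor C n2 n1 n3 :=
  tmode3 (invmx M) [ffun k => ctmx (tmode3 M A k)].

Definition is_MP_inverse (C : numClosedFieldType) (n1 n2 n3 : nat) (M : 'M[C]_n3)
  (A : tensor C n1 n2 n3) (W : tensor C n2 n1 n3) : Prop :=
  [/\ mprod M (mprod M A W) A = A,
      mprod M (mprod M W A) W = W,
      tctr M (mprod M A W) = mprod M A W &
      tctr M (mprod M W A) = mprod M W A].

Definition is_inner_inverse (C : numClosedFieldType) (n1 n2 n3 : nat) (M : 'M[C]_n3)
  (A : tensor C n1 n2 n3) (W : tensor C n2 n1 n3) : Prop :=
  mprod M (mprod M A W) A = A.

Definition one_star (C : numClosedFieldType) (n1 n2 n3 : nat) (M : 'M[C]_n3)
  (A : tensor C n1 n2 n3) (Am : tensor C n2 n1 n3) : tensor C n2 n1 n3 :=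
  mprod M (mprod M Am A) (tctr M A).

(* Main.v *)
Require Import Defs.
From mathcomp Require Import all_boot all_order all_algebra.
Import GRing.Theory Num.Theory.
Local Open Scope ring_scope.

Lemma tmode3_comp (C : numClosedFieldType) (n1 n2 n3 : nat) (P Q : 'M[C]_n3)
  (A : tensor C n1 n2 n3) : tmode3 P (tmode3 Q A) = tmode3 (P *m Q) A.
Proof.
apply/ffunP => k; rewrite !ffunE.
under eq_bigr => l _ do rewrite ffunE scaler_sumr.
rewrite exchange_big /=; apply: eq_bigr => j _.
rewrite mxE scaler_suml; apply: eq_bigr => l _; by rewrite scalerA.
Qed.

Lemma tmode3_1 (C : numClosedFieldType) (n1 n2 n3 : nat)
  (A : tensor C n1 n2 n3) : tmode3 1%:M A = A.
Proof.
apply/ffunP => k; rewrite ffunE (bigD1 k) //= big1 ?addr0 ?mxE ?eqxx ?scale1r //.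
by move=> l /negPf hl; rewrite mxE eq_sym hl scale0r.
Qed.

Lemma hat_ext (C : numClosedFieldType) (n1 n2 n3 : nat) (M : 'M[C]_n3)
  (hM : M \in unitmx) (X Y : tensor C n1 n2 n3) :
  (forall k, tmode3 M X k = tmode3 M Y k) -> X = Y.
Proof.
move=> h; have e : tmode3 M X = tmode3 M Y by apply/ffunP.
have := congr1 (tmode3 (invmx M)) e.
by rewrite !tmode3_comp mulVmx // !tmode3_1.
Qed.

Lemma hat_inv (C : numClosedFieldType) (n1 n2 n3 : nat) (M : 'M[C]_n3)
  (hM : M \in unitmx) (X : tensor C n1 n2 n3) :
  tmode3 M (tmode3 (invmx M) X) = X.
Proof. by rewrite tmode3_comp mulmxV // tmode3_1. Qed.

Lemma hat_mprod (C : numClosedFieldType) (n1 n2 l n3 : nat) (M : 'M[C]_n3)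
  (hM : M \in unitmx) (A : tensor C n1 n2 n3) (B : tensor C n2 l n3) k :
  tmode3 M (mprod M A B) k = tmode3 M A k *m tmode3 M B k.
Proof. by rewrite /mprod hat_inv // ffunE. Qed.

Lemma hat_tctr (C : numClosedFieldType) (n1 n2 n3 : nat) (M : 'M[C]_n3)
  (hM : M \in unitmx) (A : tensor C n1 n2 n3) k :
  tmode3 M (tctr M A) k = ctmx (tmode3 M A k).
Proof. by rewrite /tctr hat_inv // ffunE. Qed.

Lemma ctmxM (C : numClosedFieldType) m n p (A : 'M[C]_(m,n)) (B : 'M[C]_(n,p)) :
  ctmx (A *m B) = ctmx B *m ctmx A.
Proof. by rewrite /ctmx map_mxM trmx_mul. Qed.

Theorem theorem3p10 (C : numClosedFieldType) (n1 n2 n3 : nat) (M : 'M[C]_n3)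
  (hM : M \in unitmx)
  (A : tensor C n1 n2 n3) (Am : tensor C n2 n1 n3)
  (hAm : is_inner_inverse M A Am)
  (Ad : tensor C n2 n1 n3) (hAd : is_MP_inverse M A Ad) :
  forall X : tensor C n2 n1 n3,
    [/\ mprod M (mprod M X (tctr M Ad)) X = X,
        mprod M A X = mprod M A (tctr M A) &
        mprod M X (tctr M Ad) = mprod M Am A]
    <-> X = one_star M A Am.
Proof.
move=> X.
have hg : forall k, tmode3 M A k *m tmode3 M Am k *m tmode3 M A k = tmode3 M A k.
  by move=> k; rewrite -!hat_mprod // hAm.
case: hAd => hd1 _ _ hd4.
have hd : forall k, tmode3 M A k *m tmode3 M Ad k *m tmode3 M A k = tmode3 M A k.
  by move=> k; rewrite -!hat_mprod // hd1.
have hs : forall k, ctmx (tmode3 M A k) *m ctmx (tmode3 M Ad k)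
                    = tmode3 M Ad k *m tmode3 M A k.
  move=> k; rewrite -ctmxM -hat_mprod // -hat_tctr // hd4 hat_mprod //.
split.
- case=> h1 h2 h3; apply: (@hat_ext C n2 n1 n3 M hM) => k.
  have e1 := congr1 (fun T => tmode3 M T k) h1; have e2 := congr1 (fun T => tmode3 M T k) h2;
  have e3 := congr1 (fun T => tmode3 M T k) h3; move: e1 e2 e3 => /=.
  rewrite /one_star !hat_mprod // !hat_tctr // => e1 e2 e3.
  by rewrite -e1 e3 -mulmxA e2 mulmxA.
- move=> ->; rewrite /one_star.
  have k3 : mprod M (mprod M (mprod M Am A) (tctr M A)) (tctr M Ad)
      = mprod M Am A.
    apply: (@hat_ext C _ _ n3 M hM) => k.
    rewrite !hat_mprod // !hat_tctr // -mulmxA hs !mulmxA.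
    by rewrite -!mulmxA (mulmxA (tmode3 M A k)) hd.
  split.
  + rewrite k3; apply: (@hat_ext C _ _ n3 M hM) => k.
    rewrite !hat_mprod // !hat_tctr //.
    set a := tmode3 M A k; set g := tmode3 M Am k.
    by rewrite !mulmxA -(mulmxA g a g) -(mulmxA g (a *m g) a) hg.
  + apply: (@hat_ext C _ _ n3 M hM) => k.
    by rewrite !hat_mprod // !mulmxA hg.
  + by rewrite k3.
Qed.
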